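(* Let $L$ be a finite periodic (toroidal) square lattice in two dimensions with lattice spacing $\Delta>0$, and for functions $f$ on $L$ write $\int f=\Delta^2\sum_{x\in L} f(x)$. Let $-\partial^2$ denote the lattice Laplacian (the finite-difference Laplacian, a positive semidefinite self-adjoint operator on functions on $L$). Fix $N\ge 1$, a constant $\mu>0$, a field $\hat M:L\to\{\text{real diagonal } N\times N \text{ matrices}\}$ and a source field $J:L\to\{\text{real } N\times N\text{ matrices}\}$, $x\mapsto (J_{ab}(x))_{a,b=1}^N$. For a field $O:L\to O(N)$ set $M(x)=O(x)^t\hat M(x)O(x)$ and let $K=K(O)$ be the operator on $\mathbb{C}^N$-valued functions on $L$ given by $$K_{aa'}=(-\partial^2+\mu)\,\delta_{aa'}-i\,M_{aa'},$$ where $M$ acts by pointwise multiplication by the matrix $M(x)$. Then $K(O)$ is invertible, and the function $$O\longmapsto \exp\Big[-\tfrac12\int J_{ab}\,(K_{aa'})^{-1}J_{a'b}\Big]$$ (summation over repeated indices $a,a',b$, the inverse $K^{-1}$ acting on the functions $x\mapsto J_{a'b}(x)$, $a'=1,\dots,N$, for each fixed $b$) is Lipschitz on the space of fields $O:L\to O(N)$ with respect to the metric $$d(O,O')=\int \|O-O'\|_{HS}=\Delta^2\sum_{x\in L}\|O(x)-O'(x)\|_{HS},$$ where $\|\cdot\|_{HS}$ is the Hilbert–Schmidt norm; i.e. there is a constant $C$ (depending on $J,\hat M,\mu$ and the lattice, but not on $O,O'$) such that the absolute difference of the function's values at $O$ and $O'$ is at most $C\,d(O,O')$.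
   Context: This is the lattice regularization of the $O(N)$ principal chiral model: $\hat M$ is the diagonalized (and contour-shifted by $i\mu$) Lagrange multiplier field, $O$ the pointwise diagonalizing orthogonal matrices, and $K$ the resulting quadratic form kernel after integrating out the original field. Indices $a,a',b$ range over $1,\dots,N$. *)

(* Defs.v *)
From HB Require Import structures.
From mathcomp Require Import all_boot all_order all_algebra.
From mathcomp Require Import all_classical all_reals all_analysis.
From mathcomp Require Import complex.
Set Implicit Arguments. Unset Strict Implicit. Unset Printing Implicit Defensive.
Import Order.TTheory GRing.Theory Num.Theory.
Local Open Scope ring_scope.
Local Open Scope complex_scope.

Section PCM.
Variable R : realType.

Definition cexp (z : R[i]) : R[i] :=
  (expR (complex.Re z))%:C * (cos (complex.Im z) +i* sin (complex.Im z)).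

(* periodic square lattice with (n+1) x (n+1) sites *)
Definition site (n : nat) := ('I_n.+1 * 'I_n.+1)%type.

Definition orthogonal_mx (N : nat) (A : 'M[R]_N) : Prop := A^T *m A = 1%:M.

Definition hs_norm (N : nat) (A : 'M[R]_N) : R :=
  Num.sqrt (\sum_(i < N) \sum_(j < N) A i j ^+ 2).

Definition field_dist (n N : nat) (Delta : R) (O O' : site n -> 'M[R]_N) : R :=
  Delta ^+ 2 * \sum_(x : site n) hs_norm (O x - O' x).

(* matrix of the lattice Laplacian -d^2 (periodic, spacing Delta):
   (-d^2 f)(x) = Delta^-2 sum_{mu=1,2} (2 f(x) - f(x+e_mu) - f(x-e_mu)) *)
Definition lap (n : nat) (Delta : R) (x y : site n) : R :=
  Delta ^- 2 * (4 * (x == y)%:R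
    - ((y == (ordS x.1, x.2))%:R + (y == (ord_pred x.1, x.2))%:R
       + (y == (x.1, ordS x.2))%:R + (y == (x.1, ord_pred x.2))%:R)).

(* index set for C^N-valued functions on the lattice *)
Definition idx (n N : nat) := (site n * 'I_N)%type.

Definition Mfield (n N : nat) (Mhat O : site n -> 'M[R]_N) (x : site n) : 'M[R]_N :=
  (O x)^T *m Mhat x *m O x.

(* K_{aa'} = (-d^2 + mu) delta_{aa'} - i M_{aa'}, as a matrix on
   C^{L x N} (indices enumerated through enum_val) *)
Definition Kmx (n N : nat) (Delta mu : R) (Mhat O : site n -> 'M[R]_N)
  : 'M[R[i]]_#|{: idx n N}| :=
  \matrix_(i, j)
    let: (x, a) := enum_val i in let: (y, a') := enum_val j in
    ((lap Delta x y + mu * (x == y)%:R) * (a == a')%:R)%:C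
    - 'i * ((x == y)%:R * Mfield Mhat O x a a')%:C.

Definition quad_form (n N : nat) (Delta mu : R) (Mhat O J : site n -> 'M[R]_N)
  : R[i] :=
  - (2%:R)^-1 * ((Delta ^+ 2)%:C *
    \sum_(x : site n) \sum_(a < N) \sum_(b < N)
      (J x a b)%:C *
      \sum_(j : 'I_#|{: idx n N}|)
        invmx (Kmx Delta mu Mhat O) (enum_rank (x, a)) j
        * (J (enum_val j).1 (enum_val j).2 b)%:C).

Definition Zfun (n N : nat) (Delta mu : R) (Mhat O J : site n -> 'M[R]_N)
  : R[i] := cexp (quad_form Delta mu Mhat O J).

End PCM.

(* Main.v *)
Require Import Defs.
From HB Require Import structures.
From mathcomp Require Import all_boot all_order all_algebra.
From mathcomp Require Import all_classical all_reals all_analysis.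
From mathcomp Require Import complex.
Import Order.TTheory GRing.Theory Num.Theory.
Import numFieldNormedType.Exports.
Set Implicit Arguments. Unset Strict Implicit. Unset Printing Implicit Defensive.
Local Open Scope ring_scope.
Local Open Scope complex_scope.
From mathcomp Require Import ring lra.
Section Lip.
Variable R : realType.

Lemma lip_seg (f df : R -> R) (a b : R) :
  a <= b -> (forall x : R, is_derive x (1:R) f (df x)) ->
  (forall c, a <= c <= b -> `|df c| <= 1) ->
  `|f b - f a| <= b - a.
Proof.
move=> ab fd dfb.
have [c cin ->] : exists2 c, c \in `[a, b]%R & f b - f a = df c * (b - a).
  have cf : continuous (f : R -> R).
    move=> x; apply: (@differentiable_continuous _ R R); apply/derivable1_diffP.
    have := fd x; case=> H _; exact: H.
  exact: (MVT_segment ab (fun x _ => fd x) (continuous_subspaceT cf)).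
rewrite normrM (@ger0_norm _ (b - a)) ?subr_ge0 //.
rewrite -[X in _ <= X]mul1r ler_wpM2r ?subr_ge0 //.
apply: dfb; move: cin; by rewrite in_itv /=.
Qed.

Lemma lip_cos (x y : R) : `|cos x - cos y| <= `|x - y|.
Proof.
wlog xy : x y / y <= x.
  move=> H; case: (leP y x) => [/H //| /ltW /H]. by rewrite distrC (distrC x).
rewrite (@ger0_norm _ (x - y)) ?subr_ge0 //.
apply: lip_seg => // c _; by rewrite normrN sin_max.
Qed.

Lemma lip_sin (x y : R) : `|sin x - sin y| <= `|x - y|.
Proof.
wlog xy : x y / y <= x.
  move=> H; case: (leP y x) => [/H //| /ltW /H]. by rewrite distrC (distrC x).
rewrite (@ger0_norm _ (x - y)) ?subr_ge0 //.
apply: lip_seg => // c _; by rewrite cos_max.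
Qed.

Lemma lip_exp (x y : R) : x <= 0 -> y <= 0 -> `|expR x - expR y| <= `|x - y|.
Proof.
wlog xy : x y / y <= x.
  move=> H x0 y0; case: (leP y x) => [/H ->//| /ltW /H]. by rewrite distrC (distrC x); apply.
move=> x0 y0.
rewrite (@ger0_norm _ (x - y)) ?subr_ge0 //.
apply: lip_seg => // c /andP[_ cx]. rewrite ger0_norm ?expR_ge0 //.
rewrite -expR0 ler_expR. exact: le_trans cx x0.
Qed.
End Lip.

Section Gen.
Variable R : realType.
Variable I : finType.

Definition n2 (f : I -> R) : R := Num.sqrt (\sum_i f i ^+ 2).

Lemma sumsq_ge0 (f : I -> R) : 0 <= \sum_i f i ^+ 2.
Proof. by apply: sumr_ge0 => i _; rewrite sqr_ge0. Qed.

Lemma n2_ge0 f : 0 <= n2 f.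
Proof. exact: sqrtr_ge0. Qed.

Lemma n2_sq f : n2 f ^+ 2 = \sum_i f i ^+ 2.
Proof. by rewrite sqr_sqrtr // sumsq_ge0. Qed.

Lemma sum2_split (F G H : I -> I -> R) :
  \sum_i \sum_j (F i j + G i j - H i j) =
  \sum_i \sum_j F i j + \sum_i \sum_j G i j - \sum_i \sum_j H i j.
Proof.
rewrite -big_split -sumrB /=; apply: eq_bigr => i _.
by rewrite -big_split -sumrB.
Qed.

Lemma cs (a b : I -> R) :
  (\sum_i a i * b i) ^+ 2 <= (\sum_i a i ^+ 2) * (\sum_i b i ^+ 2).
Proof.
have E1 : \sum_i \sum_j (a i * b j - a j * b i) ^+ 2 =
     \sum_i \sum_j (a i ^+ 2 * b j ^+ 2 + a j ^+ 2 * b i ^+ 2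
     - 2 * ((a i * b i) * (a j * b j))).
  by apply: eq_bigr => i _; apply: eq_bigr => j _; ring.
rewrite sum2_split [X in _ + X - _]exchange_big /= in E1.
have E2 : (\sum_i a i ^+ 2) * (\sum_i b i ^+ 2) = \sum_i \sum_j a i ^+ 2 * b j ^+ 2.
  by rewrite mulr_suml; apply: eq_bigr => i _; rewrite mulr_sumr.
have E3 : (\sum_i a i * b i) ^+ 2 = \sum_i \sum_j (a i * b i) * (a j * b j).
  by rewrite expr2 mulr_suml; apply: eq_bigr => i _; rewrite mulr_sumr.
have E4 : \sum_i \sum_j 2 * (a i * b i * (a j * b j)) = 2 * \sum_i \sum_j (a i * b i) * (a j * b j).
  by rewrite mulr_sumr; apply: eq_bigr => i _; rewrite mulr_sumr.
have H0 : 0 <= \sum_i \sum_j (a i * b j - a j * b i) ^+ 2.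
  by apply: sumr_ge0 => i _; apply: sumr_ge0 => j _; rewrite sqr_ge0.
rewrite E1 E4 in H0. rewrite E2 E3. lra.
Qed.

Lemma cs_abs (a b : I -> R) : `|\sum_i a i * b i| <= n2 a * n2 b.
Proof.
rewrite -sqrtrM ?sumsq_ge0 // -(sqrtr_sqr (\sum_i a i * b i)).
by rewrite ler_sqrt ?mulr_ge0 ?sumsq_ge0 // cs.
Qed.

Lemma minkowski (a b : I -> R) : n2 (fun i => a i + b i) <= n2 a + n2 b.
Proof.
rewrite -(ger0_norm (n2_ge0 (fun i => a i + b i))) -(ger0_norm (addr_ge0 (n2_ge0 a) (n2_ge0 b))).
rewrite -ler_sqr ?nnegrE ?normr_ge0 // !real_normK ?num_real //.
rewrite n2_sq sqrrD !n2_sq.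
have -> : \sum_i (a i + b i) ^+ 2 = \sum_i a i ^+ 2 + \sum_i b i ^+ 2 + 2 * \sum_i a i * b i.
  rewrite mulr_sumr -!big_split /=; apply: eq_bigr => i _; ring.
have := cs_abs a b. have := ler_norm (\sum_i a i * b i).
set s := \sum_i a i * b i. set A := \sum_i a i ^+ 2. set B := \sum_i b i ^+ 2.
move=> h1 h2. rewrite mulr2n. nra.
Qed.

Lemma n2_le_sum (f : I -> R) : (forall i, 0 <= f i) -> n2 f <= \sum_i f i.
Proof.
move=> f0.
rewrite -(ger0_norm (n2_ge0 f)) -(ger0_norm (sumr_ge0 _ (fun i _ => f0 i))).
rewrite -ler_sqr ?nnegrE ?normr_ge0 // !real_normK ?num_real // n2_sq.
rewrite expr2 mulr_suml; apply: ler_sum => i _.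
rewrite expr2 ler_wpM2l //.
by rewrite (bigD1 i) //= lerDl; apply: sumr_ge0 => j _.
Qed.

End Gen.
Section HS.
Variable R : realType.

Lemma le_sq (x y : R) : 0 <= x -> 0 <= y -> x ^+ 2 <= y ^+ 2 -> x <= y.
Proof. by move=> x0 y0; rewrite ler_sqr ?nnegrE. Qed.

Lemma hs_ge0 N (A : 'M[R]_N) : 0 <= hs_norm A.
Proof. exact: sqrtr_ge0. Qed.

Lemma hs_sq N (A : 'M[R]_N) : hs_norm A ^+ 2 = \sum_i \sum_j A i j ^+ 2.
Proof.
rewrite sqr_sqrtr //; apply: sumr_ge0 => i _; apply: sumr_ge0 => j _; exact: sqr_ge0.
Qed.

Lemma hs_n2 N (A : 'M[R]_N) : hs_norm A = n2 (fun p : 'I_N * 'I_N => A p.1 p.2).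
Proof. by rewrite /hs_norm /n2 pair_big. Qed.

Lemma hsD N (A B : 'M[R]_N) : hs_norm (A + B) <= hs_norm A + hs_norm B.
Proof.
rewrite !hs_n2.
have -> : (fun p : 'I_N * 'I_N => (A + B) p.1 p.2) = (fun p => A p.1 p.2 + B p.1 p.2).
  by apply: boolp.funext => p; rewrite mxE.
exact: minkowski.
Qed.

Lemma hsN N (A : 'M[R]_N) : hs_norm (- A) = hs_norm A.
Proof.
rewrite /hs_norm; congr Num.sqrt; apply: eq_bigr => i _; apply: eq_bigr => j _.
by rewrite mxE sqrrN.
Qed.

Lemma hs_tr N (A : 'M[R]_N) : hs_norm A^T = hs_norm A.
Proof.
rewrite /hs_norm exchange_big; congr Num.sqrt; apply: eq_bigr => i _; apply: eq_bigr => j _.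
by rewrite mxE.
Qed.

Lemma hsM N (A B : 'M[R]_N) : hs_norm (A *m B) <= hs_norm A * hs_norm B.
Proof.
apply: le_sq; rewrite ?mulr_ge0 ?hs_ge0 //.
rewrite exprMn !hs_sq.
apply: (@le_trans _ _ (\sum_i \sum_j (\sum_k A i k ^+ 2) * (\sum_k B k j ^+ 2))).
  apply: ler_sum => i _; apply: ler_sum => j _; rewrite mxE; exact: cs.
rewrite mulr_suml; apply: ler_sum => i _.
rewrite -mulr_sumr ler_wpM2l //; first by apply: sumr_ge0 => k _; exact: sqr_ge0.
by rewrite exchange_big.
Qed.

Lemma hs_orth N (O : 'M[R]_N) : orthogonal_mx O -> hs_norm O ^+ 2 = N%:R.
Proof.
move=> HO; rewrite hs_sq exchange_big /=.
have -> : N%:R = \sum_(j < N) (1%:M : 'M[R]_N) j j.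
  by under eq_bigr => j _ do rewrite mxE eqxx; rewrite sumr_const card_ord.
rewrite -HO; apply: eq_bigr => j _; rewrite mxE; apply: eq_bigr => i _.
by rewrite mxE expr2.
Qed.
End HS.
Section Lap.
Variable R : realType.
Variables (n : nat) (Delta : R).

Lemma sum_ind (T : finType) (c : T) (g : T -> R) :
  \sum_y (y == c)%:R * g y = g c.
Proof.
rewrite (bigD1 c) //= eqxx mul1r big1 ?addr0 // => y /negbTE ->; by rewrite mul0r.
Qed.

Lemma sum_ind' (T : finType) (c : T) (g : T -> R) :
  \sum_y (c == y)%:R * g y = g c.
Proof. by under eq_bigr => y _ do rewrite eq_sym; exact: sum_ind. Qed.

Lemma lap_row (x : site n) (g : site n -> R) :
  \sum_y lap Delta x y * g y = Delta ^- 2 * (4 * g x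
     - (g (ordS x.1, x.2) + g (ord_pred x.1, x.2) + g (x.1, ordS x.2) + g (x.1, ord_pred x.2))).
Proof.
set c1 := (ordS x.1, x.2). set c2 := (ord_pred x.1, x.2).
set c3 := (x.1, ordS x.2). set c4 := (x.1, ord_pred x.2).
have E : forall y, lap Delta x y * g y = Delta ^- 2 * (4 * ((x == y)%:R * g y)
   - ((y == c1)%:R * g y + (y == c2)%:R * g y + (y == c3)%:R * g y + (y == c4)%:R * g y)).
  move=> y; rewrite /lap; ring.
under eq_bigr => y _ do rewrite E.
rewrite -mulr_sumr sumrB !big_split /= -mulr_sumr sum_ind' !sum_ind //.
Qed.

Lemma perm_term (s : site n -> site n) (g : site n -> R) : injective s ->
  0 <= \sum_x (g x ^+ 2 - g x * g (s x)).
Proof.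
move=> si.
have E : \sum_x g (s x) ^+ 2 = \sum_x g x ^+ 2.
  by rewrite [RHS](reindex_inj si).
have : 0 <= \sum_x (g x - g (s x)) ^+ 2 by apply: sumr_ge0 => x _; exact: sqr_ge0.
have -> : \sum_x (g x - g (s x)) ^+ 2 = (\sum_x (g x ^+ 2 - g x * g (s x))) *+ 2 + (\sum_x g (s x) ^+ 2 - \sum_x g x ^+ 2).
  rewrite -sumrMnl -sumrB -big_split /=; apply: eq_bigr => x _; rewrite sqrrB; ring.
rewrite E subrr addr0 pmulrn_lge0 //.
Qed.

Lemma inj1 : injective (fun x : site n => (ordS x.1, x.2)).
Proof. move=> [a b] [c d] E; have h1 : ordS a = ordS c := congr1 fst E; have h2 : b = d := congr1 snd E; by rewrite (ordS_inj h1) h2. Qed.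
Lemma inj2 : injective (fun x : site n => (ord_pred x.1, x.2)).
Proof. move=> [a b] [c d] E; have h1 : ord_pred a = ord_pred c := congr1 fst E; have h2 : b = d := congr1 snd E; by rewrite (ord_pred_inj h1) h2. Qed.
Lemma inj3 : injective (fun x : site n => (x.1, ordS x.2)).
Proof. move=> [a b] [c d] E; have h2 : ordS b = ordS d := congr1 snd E; have h1 : a = c := congr1 fst E; by rewrite (ordS_inj h2) h1. Qed.
Lemma inj4 : injective (fun x : site n => (x.1, ord_pred x.2)).
Proof. move=> [a b] [c d] E; have h2 : ord_pred b = ord_pred d := congr1 snd E; have h1 : a = c := congr1 fst E; by rewrite (ord_pred_inj h2) h1. Qed.

Lemma lap_psd (g : site n -> R) : 0 <= \sum_x \sum_y lap Delta x y * g x * g y.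
Proof.
have E : forall x, \sum_y lap Delta x y * g x * g y = g x * \sum_y lap Delta x y * g y.
  by move=> x; rewrite mulr_sumr; apply: eq_bigr => y _; ring.
under eq_bigr => x _ do rewrite E lap_row.
have := perm_term g (@inj1); have := perm_term g (@inj2); have := perm_term g (@inj3); have := perm_term g (@inj4).
move=> h1 h2 h3 h4.
have -> : \sum_x g x * (Delta ^- 2 * (4 * g x - (g (ordS x.1, x.2) + g (ord_pred x.1, x.2) + g (x.1, ordS x.2) + g (x.1, ord_pred x.2))))
  = Delta ^- 2 * (\sum_x (g x ^+ 2 - g x * g (ordS x.1, x.2)) + \sum_x (g x ^+ 2 - g x * g (ord_pred x.1, x.2))
   + \sum_x (g x ^+ 2 - g x * g (x.1, ordS x.2)) + \sum_x (g x ^+ 2 - g x * g (x.1, ord_pred x.2))).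
  rewrite -!big_split mulr_sumr /=; apply: eq_bigr => x _; ring.
by rewrite mulr_ge0 ?invr_ge0 ?sqr_ge0 ?addr_ge0.
Qed.
End Lap.
Section Cplx.
Variable R : realType.
Lemma ReD (x y : R[i]) : complex.Re (x + y) = complex.Re x + complex.Re y.
Proof. by case: x; case: y. Qed.
Lemma ImD (x y : R[i]) : complex.Im (x + y) = complex.Im x + complex.Im y.
Proof. by case: x; case: y. Qed.
Lemma Re_sum (I : finType) (F : I -> R[i]) : complex.Re (\sum_i F i) = \sum_i complex.Re (F i).
Proof. by apply: (big_morph _ ReD). Qed.
Lemma Im_sum (I : finType) (F : I -> R[i]) : complex.Im (\sum_i F i) = \sum_i complex.Im (F i).
Proof. by apply: (big_morph _ ImD). Qed.
Lemma Re_K (a b : R) (w : R[i]) :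
  complex.Re ((a%:C - 'i * b%:C) * w) = a * complex.Re w + b * complex.Im w.
Proof. case: w => p q /=. ring. Qed.
Lemma Im_K (a b : R) (w : R[i]) :
  complex.Im ((a%:C - 'i * b%:C) * w) = a * complex.Im w - b * complex.Re w.
Proof. case: w => p q /=. ring. Qed.
Lemma Re_rC (a : R) (w : R[i]) : complex.Re (a%:C * w) = a * complex.Re w.
Proof. case: w => p q /=. ring. Qed.
Lemma Im_rC (a : R) (w : R[i]) : complex.Im (a%:C * w) = a * complex.Im w.
Proof. case: w => p q /=. ring. Qed.
End Cplx.

Section Main.
Variable R : realType.
Variables (n N : nat) (Delta mu : R) (Mhat : site n -> 'M[R]_N).
Hypothesis mupos : 0 < mu.
Hypothesis Hdiag : forall x, is_diag_mx (Mhat x).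
Local Notation T := (idx n N).
Local Notation m := #|{: idx n N}|.
Local Notation K O := (Kmx Delta mu Mhat O).
Local Notation ev := (@enum_val T (mem {: T})).


Definition Ar (s t : T) : R := (lap Delta s.1 t.1 + mu * (s.1 == t.1)%:R) * (s.2 == t.2)%:R.
Definition Mr (O : site n -> 'M[R]_N) (s t : T) : R :=
  (s.1 == t.1)%:R * Mfield Mhat O s.1 s.2 t.2.

Lemma KmxE O i j : K O i j = (Ar (ev i) (ev j))%:C - 'i * (Mr O (ev i) (ev j))%:C.
Proof.
rewrite mxE /Ar /Mr; case: (enum_val i) => x a; case: (enum_val j) => y b. done.
Qed.

Definition re (v : 'cV[R[i]]_m) i := complex.Re (v i 0).
Definition im (v : 'cV[R[i]]_m) i := complex.Im (v i 0).
Definition sq v := \sum_i (re v i ^+ 2 + im v i ^+ 2).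
Definition ip v w := \sum_i (re v i * re w i + im v i * im w i).

Lemma re_mul O w i : re (K O *m w) i = \sum_j (Ar (ev i) (ev j) * re w j + Mr O (ev i) (ev j) * im w j).
Proof. rewrite /re mxE Re_sum; apply: eq_bigr => j _; by rewrite KmxE Re_K. Qed.
Lemma im_mul O w i : im (K O *m w) i = \sum_j (Ar (ev i) (ev j) * im w j - Mr O (ev i) (ev j) * re w j).
Proof. rewrite /im mxE Im_sum; apply: eq_bigr => j _; by rewrite KmxE Im_K. Qed.

Lemma diag_tr (H : 'M[R]_N) : is_diag_mx H -> H^T = H.
Proof.
move=> /is_diag_mxP dH; apply/matrixP => i j; rewrite mxE.
case: (eqVneq i j) => [-> //|ij]. by rewrite !dH // eq_sym.
Qed.

Lemma Mfield_sym O x a b : Mfield Mhat O x a b = Mfield Mhat O x b a.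
Proof.
have : (Mfield Mhat O x)^T = Mfield Mhat O x.
  by rewrite /Mfield !trmx_mul trmxK (diag_tr (Hdiag x)) mulmxA.
by move/matrixP => /(_ b a); rewrite mxE.
Qed.

Lemma Mr_sym O s t : Mr O s t = Mr O t s.
Proof.
rewrite /Mr eq_sym; case: eqP => [-> | _]; [by rewrite Mfield_sym | by rewrite !mul0r].
Qed.

Lemma sum_enum (F : T -> R) : \sum_s F s = \sum_i F (ev i).
Proof. by rewrite big_enum_val. Qed.

Lemma sum_ev (G : T -> T -> R) : \sum_i \sum_j G (ev i) (ev j) = \sum_s \sum_t G s t.
Proof.
rewrite sum_enum; apply: eq_bigr => i _; by rewrite sum_enum.
Qed.

Lemma sumT (G : T -> R) : \sum_s G s = \sum_x \sum_a G (x, a).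
Proof. by rewrite pair_big /=; apply: eq_bigr => -[x a]. Qed.


Lemma A_pos (F : T -> R) : mu * \sum_s F s ^+ 2 <= \sum_s \sum_t Ar s t * F s * F t.
Proof.
have E1 : \sum_s \sum_t Ar s t * F s * F t =
    \sum_x \sum_a \sum_y (lap Delta x y + mu * (x == y)%:R) * F (x, a) * F (y, a).
  rewrite sumT; apply: eq_bigr => x _; apply: eq_bigr => a _.
  rewrite sumT; apply: eq_bigr => y _.
  have H : forall b, Ar (x, a) (y, b) * F (x, a) * F (y, b) =
     (a == b)%:R * ((lap Delta x y + mu * (x == y)%:R) * F (x, a) * F (y, b)).
    by move=> b; rewrite /Ar /=; ring.
  under eq_bigr => b _ do rewrite H.
  by rewrite sum_ind'.
rewrite E1 sumT exchange_big [X in _ <= X]exchange_big /= mulr_sumr.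
apply: ler_sum => a _.
have E2 : \sum_x \sum_y (lap Delta x y + mu * (x == y)%:R) * F (x, a) * F (y, a) =
   \sum_x \sum_y lap Delta x y * F (x, a) * F (y, a) + mu * \sum_x F (x, a) ^+ 2.
  rewrite mulr_sumr -big_split; apply: eq_bigr => x _ /=.
  have H : forall y, (lap Delta x y + mu * (x == y)%:R) * F (x, a) * F (y, a) =
     lap Delta x y * F (x, a) * F (y, a) + (x == y)%:R * (mu * F (x, a) * F (y, a)).
    by move=> y; ring.
  under eq_bigr => y _ do rewrite H.
  rewrite big_split /= sum_ind'; congr (_ + _); ring.
rewrite E2 lerDr.
exact: (lap_psd Delta (fun x => F (x, a))).
Qed.

Lemma coerc O w : mu * sq w <= ip w (K O *m w).
Proof.
set p := re w; set q := im w.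
have E : ip w (K O *m w) =
   \sum_i \sum_j Ar (ev i) (ev j) * p i * p j + \sum_i \sum_j Ar (ev i) (ev j) * q i * q j
   + (\sum_i \sum_j Mr O (ev i) (ev j) * p i * q j - \sum_i \sum_j Mr O (ev i) (ev j) * q i * p j).
  rewrite /ip -!big_split -sumrB -big_split /=; apply: eq_bigr => i _.
  rewrite re_mul im_mul !mulr_sumr -!big_split -sumrB -big_split /=; apply: eq_bigr => j _.
  rewrite /p /q; ring.
have E0 : \sum_i \sum_j Mr O (ev i) (ev j) * q i * p j = \sum_i \sum_j Mr O (ev i) (ev j) * p i * q j.
  rewrite exchange_big /=; apply: eq_bigr => i _; apply: eq_bigr => j _.
  by rewrite Mr_sym; ring.
rewrite E E0 subrr addr0.
pose P s := p (enum_rank s). pose Q s := q (enum_rank s).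
have EP : forall i, p i = P (ev i) by move=> i; rewrite /P enum_valK.
have EQ : forall i, q i = Q (ev i) by move=> i; rewrite /Q enum_valK.
have F1 : \sum_i \sum_j Ar (ev i) (ev j) * p i * p j = \sum_s \sum_t Ar s t * P s * P t.
  rewrite -sum_ev; apply: eq_bigr => i _; apply: eq_bigr => j _; by rewrite !EP.
have F2 : \sum_i \sum_j Ar (ev i) (ev j) * q i * q j = \sum_s \sum_t Ar s t * Q s * Q t.
  rewrite -sum_ev; apply: eq_bigr => i _; apply: eq_bigr => j _; by rewrite !EQ.
have F3 : sq w = \sum_s P s ^+ 2 + \sum_s Q s ^+ 2.
  rewrite /sq big_split /= !sum_enum; congr (_ + _); apply: eq_bigr => i _; by rewrite -?EP -?EQ.
rewrite F1 F2 F3 mulrDr.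
by apply: lerD; apply: A_pos.
Qed.


Lemma sq_ge0 v : 0 <= sq v.
Proof. by apply: sumr_ge0 => i _; rewrite addr_ge0 ?sqr_ge0. Qed.

Lemma ip_le v w : 2 * mu * ip v w <= mu ^+ 2 * sq v + sq w.
Proof.
rewrite /ip /sq mulr_sumr mulr_sumr -big_split /=; apply: ler_sum => i _.
have h1 := sqr_ge0 (mu * re v i - re w i). have h2 := sqr_ge0 (mu * im v i - im w i).
nra.
Qed.

Lemma coerc2 O w : mu ^+ 2 * sq w <= sq (K O *m w).
Proof.
have h1 := coerc O w. have h2 := ip_le w (K O *m w). have h3 := sq_ge0 w. have h0 := mupos.
nra.
Qed.

Lemma sq_eq0 v : sq v = 0 -> v = 0.
Proof.
move=> /eqP; rewrite psumr_eq0 => [/allP H|i _]; last by rewrite addr_ge0 ?sqr_ge0.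
apply/matrixP => i j; rewrite (ord1 j) mxE.
have /H : i \in index_enum 'I_m by rewrite mem_index_enum.
rewrite /= paddr_eq0 ?sqr_ge0 // !sqrf_eq0 => /andP[h1 h2].
move: h1 h2; rewrite /re /im; case: (v i 0) => a b /= /eqP -> /eqP -> //.
Qed.

Lemma K_unit O : K O \in unitmx.
Proof.
rewrite -unitmx_tr -row_free_unit -kermx_eq0.
apply/eqP/matrixP => i j; rewrite [RHS]mxE.
set u := row i (kermx (K O)^T).
have hu : u *m (K O)^T = 0 by apply/sub_kermxP; exact: row_sub.
have hw : K O *m u^T = 0 by rewrite -[K O]trmxK -trmx_mul hu trmx0.
have : sq u^T = 0.
  have := coerc2 O u^T; rewrite hw.
  have -> : sq 0 = 0 by rewrite /sq big1 // => k _; rewrite /re /im mxE /= expr0n /= addr0.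
  have := sq_ge0 u^T. have := mupos. move=> h0 h1 h2. apply: le_anti; apply/andP; split; last by []. have h3 : 0 < mu ^+ 2 by rewrite exprn_gt0. rewrite -(pmulr_rle0 _ h3). exact: h2.
by move/sq_eq0/matrixP => /(_ j 0); rewrite !mxE.
Qed.

Definition Em (O O' : site n -> 'M[R]_N) x := Mfield Mhat O' x - Mfield Mhat O x.
Definition beta O O' := \sum_x hs_norm (Em O O' x).
Definition Dm O O' (s t : T) := Mr O' s t - Mr O s t.

Lemma Re_Dc (a b c : R) (w : R[i]) :
  complex.Re (((a%:C - 'i * b%:C) - (a%:C - 'i * c%:C)) * w) = (b - c) * complex.Im w.
Proof. case: w => p q /=. ring. Qed.
Lemma Im_Dc (a b c : R) (w : R[i]) :
  complex.Im (((a%:C - 'i * b%:C) - (a%:C - 'i * c%:C)) * w) = - ((b - c) * complex.Re w).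
Proof. case: w => p q /=. ring. Qed.

Lemma re_diff O O' v i : re ((K O' - K O) *m v) i = \sum_j Dm O O' (ev i) (ev j) * im v j.
Proof.
rewrite /re mxE Re_sum; apply: eq_bigr => j _; by rewrite mxE [(- K O) i j]mxE !KmxE Re_Dc.
Qed.
Lemma im_diff O O' v i : im ((K O' - K O) *m v) i = - \sum_j Dm O O' (ev i) (ev j) * re v j.
Proof.
rewrite /im mxE Im_sum -sumrN; apply: eq_bigr => j _; by rewrite mxE [(- K O) i j]mxE !KmxE Im_Dc.
Qed.

Lemma sq_sum_le (I : finType) (h : I -> R) : (forall i, 0 <= h i) ->
  \sum_i h i ^+ 2 <= (\sum_i h i) ^+ 2.
Proof.
move=> h0; rewrite -n2_sq; rewrite ler_sqr ?nnegrE ?n2_ge0 ?sumr_ge0 //.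
exact: n2_le_sum.
Qed.

Lemma mxBE (A B : 'M[R]_N) a b : (A - B) a b = A a b - B a b.
Proof. by rewrite !mxE. Qed.

Lemma blk O O' (f : 'I_m -> R) :
  \sum_i (\sum_j Dm O O' (ev i) (ev j) * f j) ^+ 2 <= beta O O' ^+ 2 * \sum_i f i ^+ 2.
Proof.
pose F s := f (enum_rank s).
have EF : forall i, f i = F (ev i) by move=> i; rewrite /F enum_valK.
have L1 : \sum_i (\sum_j Dm O O' (ev i) (ev j) * f j) ^+ 2 =
   \sum_s (\sum_t Dm O O' s t * F t) ^+ 2.
  rewrite sum_enum; apply: eq_bigr => i _; rewrite sum_enum.
  by congr (_ ^+ 2); apply: eq_bigr => j _; rewrite EF.
have L2 : \sum_i f i ^+ 2 = \sum_s F s ^+ 2.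
  by rewrite sum_enum; apply: eq_bigr => i _; rewrite EF.
rewrite L1 L2.
have L3 : forall x a, \sum_t Dm O O' (x, a) t * F t = \sum_b Em O O' x a b * F (x, b).
  move=> x a; rewrite sumT.
  have H : forall y, \sum_b Dm O O' (x, a) (y, b) * F (y, b) = (x == y)%:R * \sum_b Em O O' x a b * F (y, b).
    move=> y; rewrite mulr_sumr; apply: eq_bigr => b _.
    rewrite /Dm /Mr /Em /= mxBE.
    case: eqP => [<- | _]; ring.
  under eq_bigr => y _ do rewrite H.
  by rewrite sum_ind'.
rewrite sumT.
under eq_bigr => x _ do under eq_bigr => a _ do rewrite L3.
set Phi := \sum_s F s ^+ 2.
have Hx : forall x, \sum_b F (x, b) ^+ 2 <= Phi.
  move=> x; rewrite /Phi sumT (bigD1 x) //= lerDl.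
  by apply: sumr_ge0 => y _; apply: sumr_ge0 => b _; exact: sqr_ge0.
have Phi0 : 0 <= Phi by apply: sumr_ge0 => s _; exact: sqr_ge0.
apply: (@le_trans _ _ (\sum_x hs_norm (Em O O' x) ^+ 2 * Phi)).
  apply: ler_sum => x _.
  apply: (@le_trans _ _ (hs_norm (Em O O' x) ^+ 2 * \sum_b F (x, b) ^+ 2)); last first.
    by rewrite ler_wpM2l ?sqr_ge0.
  rewrite hs_sq mulr_suml; apply: ler_sum => a _.
  exact: cs.
rewrite -mulr_suml ler_wpM2r // /beta.
apply: sq_sum_le => x; exact: hs_ge0.
Qed.

Lemma diff_bound O O' v : sq ((K O' - K O) *m v) <= beta O O' ^+ 2 * sq v.
Proof.
rewrite /sq big_split /=.
under eq_bigr => i _ do rewrite re_diff.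
under [X in _ + X <= _]eq_bigr => i _ do rewrite im_diff sqrrN.
rewrite big_split /= mulrDr addrC.
apply: lerD; [exact: (blk O O' (re v)) | exact: (blk O O' (im v))].
Qed.

Definition Hs := \sum_y hs_norm (Mhat y).

Lemma hs_orth' (Q : 'M[R]_N) : orthogonal_mx Q -> hs_norm Q = Num.sqrt N%:R.
Proof. move=> h; by rewrite -(hs_orth h) sqrtr_sqr ger0_norm ?hs_ge0. Qed.

Lemma hsM3 (A B C : 'M[R]_N) : hs_norm (A *m B *m C) <= hs_norm A * hs_norm B * hs_norm C.
Proof.
apply: (le_trans (hsM _ _)); rewrite ler_wpM2r ?hs_ge0 //; exact: hsM.
Qed.

Lemma Em_bound O O' x : orthogonal_mx (O x) -> orthogonal_mx (O' x) ->
  hs_norm (Em O O' x) <= 2 * Num.sqrt N%:R * Hs * hs_norm (O x - O' x).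
Proof.
move=> hO hO'.
have E : Em O O' x = (O' x - O x)^T *m Mhat x *m O' x + (O x)^T *m Mhat x *m (O' x - O x).
  rewrite /Em /Mfield linearB /= !mulmxBl !mulmxBr.
  by rewrite addrA subrK.
have hH : hs_norm (Mhat x) <= Hs.
  by rewrite /Hs (bigD1 x) //= lerDl; apply: sumr_ge0 => y _; exact: hs_ge0.
have hd : hs_norm (O' x - O x) = hs_norm (O x - O' x) by rewrite -opprB hsN.
rewrite E; apply: (le_trans (hsD _ _)).
apply: (@le_trans _ _ (hs_norm (O x - O' x) * Hs * Num.sqrt N%:R + Num.sqrt N%:R * Hs * hs_norm (O x - O' x))).
  apply: lerD.
    apply: (le_trans (hsM3 _ _ _)); rewrite hs_tr hd (hs_orth' hO').
    by rewrite ler_wpM2r ?sqrtr_ge0 // ler_wpM2l ?hs_ge0.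
  apply: (le_trans (hsM3 _ _ _)); rewrite hd hs_tr (hs_orth' hO).
  by rewrite ler_wpM2r ?hs_ge0 // ler_wpM2l ?sqrtr_ge0.
by rewrite le_eqVlt; apply/orP; left; apply/eqP; ring.
Qed.

Lemma beta_bound O O' : (forall x, orthogonal_mx (O x)) -> (forall x, orthogonal_mx (O' x)) ->
  beta O O' <= 2 * Num.sqrt N%:R * Hs * \sum_x hs_norm (O x - O' x).
Proof.
move=> hO hO'; rewrite /beta mulr_sumr; apply: ler_sum => x _; exact: Em_bound.
Qed.

Variable J : site n -> 'M[R]_N.

Definition Ub (b : 'I_N) (i : 'I_m) : R := J (ev i).1 (ev i).2 b.
Definition ub b : 'cV[R[i]]_m := \col_i (Ub b i)%:C.
Definition wv O b := invmx (K O) *m ub b.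
Definition Zs O := \sum_b \sum_i ub b i 0 * wv O b i 0.

Lemma K_wv O b : K O *m wv O b = ub b.
Proof. by rewrite /wv mulKVmx // K_unit. Qed.

Lemma sum_enumC (F : T -> R[i]) : \sum_s F s = \sum_i F (ev i).
Proof. by rewrite big_enum_val. Qed.

Lemma sumTC (G : T -> R[i]) : \sum_s G s = \sum_x \sum_a G (x, a).
Proof. by rewrite pair_big /=; apply: eq_bigr => -[x a]. Qed.

Lemma qf_eq O : quad_form Delta mu Mhat O J = - (2%:R)^-1 * ((Delta ^+ 2)%:C * Zs O).
Proof.
rewrite /quad_form /Zs; congr (_ * (_ * _)).
have E1 : forall b, \sum_i ub b i 0 * wv O b i 0 =
    \sum_x \sum_a ub b (enum_rank (x, a)) 0 * wv O b (enum_rank (x, a)) 0.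
  move=> b; rewrite -(sumTC (fun s => ub b (enum_rank s) 0 * wv O b (enum_rank s) 0)).
  by rewrite sum_enumC; apply: eq_bigr => i _; rewrite enum_valK.
under [RHS]eq_bigr => b _ do rewrite E1.
rewrite [RHS]exchange_big /=; apply: eq_bigr => x _.
rewrite [RHS]exchange_big /=; apply: eq_bigr => a _.
apply: eq_bigr => b _.
rewrite /ub /wv !mxE /Ub enum_rankK /=; congr (_ * _).
by apply: eq_bigr => j _; rewrite mxE.
Qed.

Lemma inv2C : (2%:R : R[i])^-1 = (2^-1 : R)%:C.
Proof. by rewrite fmorphV rmorph_nat. Qed.

Lemma Re_qf O : complex.Re (quad_form Delta mu Mhat O J) = - (2^-1 * Delta ^+ 2) * complex.Re (Zs O).
Proof.
rewrite qf_eq inv2C mulrA -rmorphN -rmorphM Re_rC; by rewrite mulNr.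
Qed.
Lemma Im_qf O : complex.Im (quad_form Delta mu Mhat O J) = - (2^-1 * Delta ^+ 2) * complex.Im (Zs O).
Proof.
rewrite qf_eq inv2C mulrA -rmorphN -rmorphM Im_rC; by rewrite mulNr.
Qed.

Lemma ReZs O : complex.Re (Zs O) = \sum_b \sum_i Ub b i * re (wv O b) i.
Proof.
rewrite /Zs Re_sum; apply: eq_bigr => b _; rewrite Re_sum; apply: eq_bigr => i _.
by rewrite /ub mxE Re_rC.
Qed.
Lemma ImZs O : complex.Im (Zs O) = \sum_b \sum_i Ub b i * im (wv O b) i.
Proof.
rewrite /Zs Im_sum; apply: eq_bigr => b _; rewrite Im_sum; apply: eq_bigr => i _.
by rewrite /ub mxE Im_rC.
Qed.

Lemma re_ub b i : re (ub b) i = Ub b i.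
Proof. by rewrite /re /ub mxE. Qed.
Lemma im_ub b i : im (ub b) i = 0.
Proof. by rewrite /im /ub mxE. Qed.

Lemma ReZs_ge0 O : 0 <= complex.Re (Zs O).
Proof.
rewrite ReZs; apply: sumr_ge0 => b _.
have -> : \sum_i Ub b i * re (wv O b) i = ip (wv O b) (K O *m wv O b).
  rewrite K_wv /ip; apply: eq_bigr => i _; rewrite re_ub im_ub; ring.
apply: le_trans (coerc O _).
by rewrite mulr_ge0 ?sq_ge0 // ltW.
Qed.

Lemma sq_ub b : sq (ub b) = n2 (Ub b) ^+ 2.
Proof. rewrite n2_sq /sq; apply: eq_bigr => i _; rewrite re_ub im_ub; ring. Qed.

Lemma wdiff O O' b : mu ^+ 2 * Num.sqrt (sq (wv O b - wv O' b)) <= beta O O' * n2 (Ub b).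
Proof.
set d := wv O b - wv O' b.
have Kd : K O *m d = (K O' - K O) *m wv O' b.
  by rewrite /d mulmxBr mulmxBl !K_wv.
have h1 := coerc2 O d. rewrite Kd in h1.
have h2 := diff_bound O O' (wv O' b).
have h3 := coerc2 O' (wv O' b). rewrite K_wv sq_ub in h3.
have h4 : mu ^+ 2 * (mu ^+ 2 * sq d) <= beta O O' ^+ 2 * n2 (Ub b) ^+ 2.
  apply: (@le_trans _ _ (mu ^+ 2 * (beta O O' ^+ 2 * sq (wv O' b)))).
    by rewrite ler_wpM2l ?sqr_ge0 // (le_trans h1 h2).
  rewrite mulrCA ler_wpM2l ?sqr_ge0 //.
apply: le_sq.
- by rewrite mulr_ge0 ?sqr_ge0 ?sqrtr_ge0.
- rewrite mulr_ge0 ?n2_ge0 // /beta; apply: sumr_ge0 => x _; exact: hs_ge0.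
rewrite !exprMn sqr_sqrtr ?sq_ge0 //.
by rewrite mulrA -expr2 in h4.
Qed.

Lemma reB v v' i : re (v - v') i = re v i - re v' i.
Proof. rewrite /re !mxE; by case: (v i 0); case: (v' i 0). Qed.
Lemma imB v v' i : im (v - v') i = im v i - im v' i.
Proof. rewrite /im !mxE; by case: (v i 0); case: (v' i 0). Qed.

Lemma n2_re v : n2 (re v) <= Num.sqrt (sq v).
Proof.
rewrite /n2 ler_sqrt ?sq_ge0 //; apply: ler_sum => i _; by rewrite lerDl sqr_ge0.
Qed.
Lemma n2_im v : n2 (im v) <= Num.sqrt (sq v).
Proof.
rewrite /n2 ler_sqrt ?sq_ge0 //; apply: ler_sum => i _; by rewrite lerDr sqr_ge0.
Qed.

Definition S2 := \sum_b n2 (Ub b) ^+ 2.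

Lemma gen_diff O O' (g : 'cV[R[i]]_m -> 'I_m -> R) :
  (forall v v' i, g (v - v') i = g v i - g v' i) ->
  (forall v, n2 (g v) <= Num.sqrt (sq v)) ->
  `|\sum_b \sum_i Ub b i * g (wv O b) i - \sum_b \sum_i Ub b i * g (wv O' b) i|
    <= beta O O' * S2 / mu ^+ 2.
Proof.
move=> gB gn.
rewrite -sumrB /S2 mulr_sumr mulr_suml.
apply: (le_trans (ler_norm_sum _ _ _)); apply: ler_sum => b _.
rewrite -sumrB.
have -> : \sum_i (Ub b i * g (wv O b) i - Ub b i * g (wv O' b) i) =
   \sum_i Ub b i * g (wv O b - wv O' b) i.
  by apply: eq_bigr => i _; rewrite gB mulrBr.
apply: (le_trans (cs_abs _ _)).
have hm : 0 < mu ^+ 2 by rewrite exprn_gt0.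
have h := wdiff O O' b.
apply: (@le_trans _ _ (n2 (Ub b) * Num.sqrt (sq (wv O b - wv O' b)))).
  by rewrite ler_wpM2l ?n2_ge0.
rewrite ler_pdivlMr // expr2.
rewrite -(mulrA (n2 (Ub b))) (mulrC _ (mu ^+ 2)).
apply: (@le_trans _ _ (n2 (Ub b) * (beta O O' * n2 (Ub b)))).
  by rewrite ler_wpM2l ?n2_ge0.
by rewrite le_eqVlt; apply/orP; left; apply/eqP; ring.
Qed.

Lemma ReZs_diff O O' : `|complex.Re (Zs O) - complex.Re (Zs O')| <= beta O O' * S2 / mu ^+ 2.
Proof. rewrite !ReZs; apply: gen_diff; [exact: reB | exact: n2_re]. Qed.
Lemma ImZs_diff O O' : `|complex.Im (Zs O) - complex.Im (Zs O')| <= beta O O' * S2 / mu ^+ 2.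
Proof. rewrite !ImZs; apply: gen_diff; [exact: imB | exact: n2_im]. Qed.

Lemma exp_f (f : R -> R) (a b c d : R) :
  (forall x, `|f x| <= 1) -> (forall x y, `|f x - f y| <= `|x - y|) ->
  a <= 0 -> c <= 0 ->
  `|expR a * f b - expR c * f d| <= `|a - c| + `|b - d|.
Proof.
move=> fb fl a0 c0.
have -> : expR a * f b - expR c * f d = (expR a - expR c) * f b + expR c * (f b - f d) by ring.
apply: (le_trans (ler_normD _ _)); apply: lerD; rewrite normrM.
  rewrite -[X in _ <= X]mulr1; apply: ler_pM; rewrite ?normr_ge0 //; exact: lip_exp.
rewrite -[X in _ <= X]mul1r; apply: ler_pM; rewrite ?normr_ge0 //.
by rewrite ger0_norm ?expR_ge0 // expR_le1.
Qed.

Lemma Re_cexp (z : R[i]) : complex.Re (cexp z) = expR (complex.Re z) * cos (complex.Im z).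
Proof. by rewrite /cexp Re_rC. Qed.
Lemma Im_cexp (z : R[i]) : complex.Im (cexp z) = expR (complex.Re z) * sin (complex.Im z).
Proof. by rewrite /cexp Im_rC. Qed.
Lemma ReB' (x y : R[i]) : complex.Re (x - y) = complex.Re x - complex.Re y.
Proof. by case: x; case: y. Qed.
Lemma ImB' (x y : R[i]) : complex.Im (x - y) = complex.Im x - complex.Im y.
Proof. by case: x; case: y. Qed.

Lemma normC_le (z : R[i]) (k : R) : `|complex.Re z| + `|complex.Im z| <= k -> `|z| <= k%:C.
Proof.
move=> h; rewrite normc_def lecR; apply: le_trans h.
apply: le_sq; rewrite ?sqrtr_ge0 ?addr_ge0 ?normr_ge0 //.
rewrite sqr_sqrtr ?addr_ge0 ?sqr_ge0 // sqrrD !real_normK ?num_real //.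
have h0 := mulr_ge0 (normr_ge0 (complex.Re z)) (normr_ge0 (complex.Im z)). rewrite mulr2n. lra.
Qed.

Lemma final O O' : (forall x, orthogonal_mx (O x)) -> (forall x, orthogonal_mx (O' x)) ->
  `|Zfun Delta mu Mhat O J - Zfun Delta mu Mhat O' J|
    <= ((4 * Num.sqrt N%:R * Hs * S2 / mu ^+ 2) * field_dist Delta O O')%:C.
Proof.
move=> hO hO'.
rewrite /Zfun; set q := quad_form Delta mu Mhat O J; set q' := quad_form Delta mu Mhat O' J.
have hD : 0 <= 2^-1 * Delta ^+ 2 by rewrite mulr_ge0 ?invr_ge0 ?ler0n ?sqr_ge0.
have ha : complex.Re q <= 0.
  by rewrite /q Re_qf mulNr oppr_le0 mulr_ge0 // ReZs_ge0.
have hc : complex.Re q' <= 0.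
  by rewrite /q' Re_qf mulNr oppr_le0 mulr_ge0 // ReZs_ge0.
have hac : `|complex.Re q - complex.Re q'| <= 2^-1 * Delta ^+ 2 * (beta O O' * S2 / mu ^+ 2).
  rewrite /q /q' !Re_qf -mulrBr normrM normrN (ger0_norm hD).
  by rewrite ler_wpM2l // ReZs_diff.
have hbd : `|complex.Im q - complex.Im q'| <= 2^-1 * Delta ^+ 2 * (beta O O' * S2 / mu ^+ 2).
  rewrite /q /q' !Im_qf -mulrBr normrM normrN (ger0_norm hD).
  by rewrite ler_wpM2l // ImZs_diff.
have hb := beta_bound hO hO'.
have hS2 : 0 <= S2 by apply: sumr_ge0 => b _; exact: sqr_ge0.
have hm : 0 < mu ^+ 2 by rewrite exprn_gt0.
apply: normC_le.
rewrite ReB' ImB' !Re_cexp !Im_cexp.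
have h1 := @exp_f cos (complex.Re q) (complex.Im q) (complex.Re q') (complex.Im q') (@cos_max R) (@lip_cos R) ha hc.
have h2 := @exp_f sin (complex.Re q) (complex.Im q) (complex.Re q') (complex.Im q') (@sin_max R) (@lip_sin R) ha hc.
apply: (le_trans (lerD h1 h2)).
set A := `|complex.Re q - complex.Re q'|. set B := `|complex.Im q - complex.Im q'|.
have -> : A + B + (A + B) = 2 * (A + B) by ring.
set bt := beta O O'. set Sx := \sum_x hs_norm (O x - O' x).
have hbt : bt * S2 / mu ^+ 2 <= 2 * Num.sqrt N%:R * Hs * Sx * S2 / mu ^+ 2.
  by rewrite ler_pM2r ?invr_gt0 // ler_wpM2r.
apply: (@le_trans _ _ (2 * (2 * (2^-1 * Delta ^+ 2 * (bt * S2 / mu ^+ 2))))).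
  rewrite ler_pM2l //. have := lerD hac hbd. set X := 2^-1 * _. move=> h; apply: le_trans h _. rewrite /bt le_eqVlt; apply/orP; left; apply/eqP; ring.
rewrite /field_dist -/Sx.
apply: (@le_trans _ _ (2 * (2 * (2^-1 * Delta ^+ 2 * (2 * Num.sqrt N%:R * Hs * Sx * S2 / mu ^+ 2))))).
  do 2 (apply: ler_wpM2l; first by []). by apply: ler_wpM2l.
by rewrite le_eqVlt; apply/orP; left; apply/eqP; field; rewrite gt_eqF.
Qed.
End Main.

Theorem mainTheorem1 (R : realType) (n N : nat) (Delta mu : R)
  (Mhat J : site n -> 'M[R]_N) :
  (0 < N)%N -> 0 < Delta -> 0 < mu ->
  (forall x, is_diag_mx (Mhat x)) ->
  (forall O : site n -> 'M[R]_N, (forall x, orthogonal_mx (O x)) ->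
     Kmx Delta mu Mhat O \in unitmx) /\
  (exists C : R, forall O O' : site n -> 'M[R]_N,
     (forall x, orthogonal_mx (O x)) -> (forall x, orthogonal_mx (O' x)) ->
     `|Zfun Delta mu Mhat O J - Zfun Delta mu Mhat O' J|
       <= (C * field_dist Delta O O')%:C).
Proof.
move=> _ _ mu0 Hd; split.
  by move=> O _; apply: K_unit.
exists (4 * Num.sqrt N%:R * Hs Mhat * S2 J / mu ^+ 2) => O O' hO hO'.
exact: final.
Qed.
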